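(* Let $x,y,z$ be positive integers with $\gcd(x,y)=1$. If there is a prime $p\ge 3$ such that $x^{p}+y^{p}=z^{p}$, then $z+2\le x+y\le 2(z-1)$. *)

(* Defs.v *)
From mathcomp Require Import all_boot.

(* Main.v *)
Require Import Defs.
From mathcomp Require Import all_boot.
From mathcomp Require Import zify.

Lemma pow_sum_lt x y p : 0 < x -> 0 < y -> 1 < p -> x ^ p + y ^ p < (x + y) ^ p.
Proof.
move=> x0 y0 p1.
have -> : p = (p.-1).+1 by rewrite prednK //; lia.
rewrite !expnS mulnDl.
have h1 : x ^ p.-1 < (x + y) ^ p.-1 by rewrite ltn_exp2r; lia.
have h2 : y ^ p.-1 <= (x + y) ^ p.-1 by rewrite leq_exp2r; lia.
have h3 : x * x ^ p.-1 < x * (x + y) ^ p.-1 by rewrite ltn_pmul2l.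
have h4 : y * y ^ p.-1 <= y * (x + y) ^ p.-1 by rewrite leq_mul2l h2 orbT.
lia.
Qed.

Theorem theorem5 (x y z : nat) :
  0 < x -> 0 < y -> 0 < z -> coprime x y ->
  (exists p : nat, [/\ prime p, 3 <= p & x ^ p + y ^ p = z ^ p]) ->
  z + 2 <= x + y <= 2 * (z - 1).
Proof.
move=> x0 y0 z0 _ [p [pp p3 E]].
have p0 : 0 < p by lia.
have xz : x < z.
  rewrite -(ltn_exp2r _ _ p0) -E.
  have : 0 < y ^ p by rewrite expn_gt0 y0.
  lia.
have yz : y < z.
  rewrite -(ltn_exp2r _ _ p0) -E.
  have : 0 < x ^ p by rewrite expn_gt0 x0.
  lia.
have zs : z < x + y.
  rewrite -(ltn_exp2r _ _ p0) -E.
  apply: pow_sum_lt => //; lia.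
have M : z = x + y %[mod p].
  rewrite -(fermat_little z pp) -E.
  by rewrite -modnDm !fermat_little // modnDm.
have D : p %| (x + y) - z.
  by rewrite -eqn_mod_dvd ?M //; lia.
have : p <= (x + y) - z by apply: dvdn_leq => //; lia.
lia.
Qed.
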